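(* Let $q$ be a prime power, $b$ a positive integer, and $M,D$ positive integers with $M>q^b$ and $D\ge b-1$. Then $N_{b+1}(M,D)\le N_b(M,D-1)$.
   Context: For a positive integer $c$ and $\boldsymbol{z}=(z_0,\ldots,z_{n-1}),\boldsymbol{w}\in\mathbb{F}_q^n$, $d_c(\boldsymbol{z},\boldsymbol{w})$ is the number of $i\in\{0,\ldots,n-1\}$ with $(z_i,\ldots,z_{i+c-1})\ne(w_i,\ldots,w_{i+c-1})$ (indices mod $n$). $N_c(M,D)$ is the smallest length $r$ such that there exist $M$ vectors $\boldsymbol{p}_1,\ldots,\boldsymbol{p}_M\in\mathbb{F}_q^r$ with $d_c(\boldsymbol{p}_i,\boldsymbol{p}_j)\ge D$ for all $i\ne j$. *)

(* Defs.v *)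
From HB Require Import structures.
From mathcomp Require Import all_boot all_order all_algebra all_field.
Set Implicit Arguments. Unset Strict Implicit. Unset Printing Implicit Defensive.

(* Vectors of length n over F are functions 'I_n -> F; indices are taken mod n. *)

Definition coordm (F : Type) (n : nat) (z : 'I_n -> F) (k : nat) (i0 : 'I_n) : F :=
  z (Ordinal (@ltn_pmod k n (leq_ltn_trans (leq0n i0) (ltn_ord i0)))).

(* d_c(z,w): number of i in {0..n-1} such that the windows
   (z_i,...,z_{i+c-1}) and (w_i,...,w_{i+c-1}) (indices mod n) differ *)
Definition dc (F : finFieldType) (c n : nat) (z w : 'I_n -> F) : nat :=
  #|[set i : 'I_n | [exists j : 'I_c, coordm z (i + j) i != coordm w (i + j) i]]|.

Definition code_exists (F : finFieldType) (c M D r : nat) : Prop :=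
  exists p : 'I_M -> ('I_r -> F),
    injective p /\ forall i j : 'I_M, i != j -> D <= dc c (p i) (p j).

Definition is_N (F : finFieldType) (c M D r : nat) : Prop :=
  code_exists F c M D r /\ forall r', code_exists F c M D r' -> r <= r'.

(* Main.v *)
Require Import Defs.
From mathcomp Require Import all_boot all_order all_algebra all_field.
From mathcomp Require Import zify.
From Stdlib Require Import Classical FunctionalExtensionality.
Set Implicit Arguments. Unset Strict Implicit. Unset Printing Implicit Defensive.
From mathcomp Require Import zify.
From Stdlib Require Import Classical FunctionalExtensionality.
Set Implicit Arguments. Unset Strict Implicit. Unset Printing Implicit Defensive.

Lemma coordm_eq (F : Type) n (z : 'I_n -> F) k k' (i0 i1 : 'I_n) :
  k %% n = k' %% n -> coordm z k i0 = coordm z k' i1.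
Proof. move=> e; rewrite /coordm; congr (z _); exact: val_inj. Qed.

Lemma coordm_ord (F : Type) n (z : 'I_n -> F) (k i0 : 'I_n) :
  coordm z (k + 0) i0 = z k.
Proof. rewrite /coordm; congr (z _); apply: val_inj => /=. by rewrite addn0 modn_small. Qed.

Section S.
Variables (F : finFieldType) (n : nat) (z w : 'I_n -> F).

Definition Sd c := [set i : 'I_n | [exists j : 'I_c, coordm z (i + j) i != coordm w (i + j) i]].

Lemma dcE c : dc c z w = #|Sd c|.
Proof. by []. Qed.

Lemma Sd_sub c : Sd c \subset Sd c.+1.
Proof.
apply/subsetP => i; rewrite !inE => /existsP [j hj]; apply/existsP.
by exists (widen_ord (leqnSn c) j).
Qed.

Definition succo (i : 'I_n) : 'I_n :=
  Ordinal (@ltn_pmod i.+1 n (leq_ltn_trans (leq0n i) (ltn_ord i))).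

Lemma Sd_succ c i : succo i \in Sd c -> i \in Sd c.+1.
Proof.
rewrite !inE => /existsP [j hj]; apply/existsP; exists (lift ord0 j).
have e : (i + (lift ord0 j)) %% n = (succo i + j) %% n.
  by rewrite /= modnDml addSnnS.
by rewrite (coordm_eq z i (succo i) e) (coordm_eq w i (succo i) e).
Qed.

Lemma Sd_grow b : 0 < b -> z <> w -> minn (#|Sd b|).+1 n <= #|Sd b.+1|.
Proof.
move=> hb hzw.
have [i iS] : exists i, i \in Sd b.
  apply/existsP; apply: contraT; rewrite negb_exists => /forallP H.
  exfalso; apply: hzw; apply: functional_extensionality => k.
  move: (H k); rewrite inE negb_exists => /forallP /(_ (Ordinal hb)).
  by rewrite negbK /= !coordm_ord => /eqP.
have hn : 0 < n by apply: leq_ltn_trans (leq0n i) (ltn_ord i).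
have cle : #|Sd b| <= n by rewrite -[n in _ <= n]card_ord max_card.
have sub := Sd_sub b.
case: (ltngtP #|Sd b| n) cle => // [lt _|eq _]; last first.
  by have := subset_leq_card sub; rewrite eq => h; exact: leq_trans (geq_minr _ _) h.
rewrite (minn_idPl lt).
rewrite ltnNge; apply/negP => le.
have E : Sd b = Sd b.+1 by apply/eqP; rewrite eqEcard sub le.
have [j _ jS] : exists2 j, j \in [set: 'I_n] & j \notin Sd b.
  apply/subsetPn; apply/negP => sT.
  move: (subset_leq_card sT); rewrite cardsT card_ord.
  by rewrite leqNgt lt.
have cl : forall x, x \notin Sd b -> succo x \notin Sd b.
  move=> x; apply: contra => sx; rewrite E; exact: Sd_succ.
have H : forall k, Ordinal (@ltn_pmod (j + k) n hn) \notin Sd b.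
  elim => [|k IH].
    suff -> : Ordinal (@ltn_pmod (j + 0) n hn) = j by [].
    by apply: val_inj => /=; rewrite addn0 modn_small.
  suff -> : Ordinal (@ltn_pmod (j + k.+1) n hn) = succo (Ordinal (@ltn_pmod (j + k) n hn)) by apply: cl.
  by apply: val_inj => /=; rewrite -[((j + k) %% n).+1]addn1 modnDml addn1 addnS.
move: (H (n - j + i)).
suff -> : Ordinal (@ltn_pmod (j + (n - j + i)) n hn) = i by rewrite iS.
apply: val_inj => /=.
have -> : j + (n - j + i) = n + i by have := ltn_ord j; lia.
by rewrite modnDl modn_small.
Qed.
End S.

Lemma exists_min (P : nat -> Prop) r : P r ->
  exists r1, (P r1 /\ forall r', P r' -> r1 <= r') /\ r1 <= r.
Proof.
have H : forall n r0, r0 <= n -> P r0 ->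
    exists r1, (P r1 /\ forall r', P r' -> r1 <= r') /\ r1 <= r0.
  elim=> [|n IH] r0 hr Pr0.
    exists r0; split => //; split => // r' _; lia.
  case: (classic (exists r', r' < r0 /\ P r')) => [[r' [lt Pr']]|nex].
    have [r1 [H1 H2]] := IH r' ltac:(lia) Pr'.
    by exists r1; split => //; lia.
  exists r0; split => //; split => // r' Pr'.
  rewrite leqNgt; apply/negP => lt; apply: nex; by exists r'.
by move=> Pr; apply: (H r r (leqnn r) Pr).
Qed.

Lemma dc_le (F : finFieldType) c n (z w : 'I_n -> F) : dc c z w <= n.
Proof. by rewrite /dc -[n in _ <= n]card_ord max_card. Qed.

Theorem mainTheorem9 (F : finFieldType) (b M D : nat) :
  0 < b -> 0 < M -> 0 < D -> #|F| ^ b < M -> b - 1 <= D ->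
  forall r, is_N F b M (D - 1) r ->
  exists r1, is_N F b.+1 M D r1 /\ r1 <= r.
Proof.
move=> hb hM hD hqM _ r [[p [pinj pd]] _].
have rD : D <= r.
  rewrite leqNgt; apply/negP => lt.
  case: (posnP r) => [r0|rpos].
    subst r.
    have M2 : 1 < M.
      apply: leq_ltn_trans hqM; rewrite expn_gt0; apply/orP; left.
      by apply/card_gt0P; exists 0%R.
    have e : p (Ordinal hM) = p (Ordinal M2).
      by apply: functional_extensionality => x; case: x.
    by move: (pinj _ _ e) => /(congr1 val).
  pose f := fun i => [ffun k : 'I_b => coordm (p i) (0 + k) (Ordinal rpos)].
  have finj : injective f.
    move=> i j e; apply/eqP; apply: contraT => nij.
    have := pd i j nij; have := dc_le b (p i) (p j) => h1 h2.
    have E : Sd (p i) (p j) b = setT.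
      apply/eqP; rewrite eqEcard subsetT cardsT card_ord -dcE; lia.
    have : Ordinal rpos \in Sd (p i) (p j) b by rewrite E inE.
    rewrite inE => /existsP [k hk].
    have := congr1 (fun g : {ffun 'I_b -> F} => g k) e; rewrite /f !ffunE => ek.
    change (is_true (coordm (p i) (0 + k) (Ordinal rpos) != coordm (p j) (0 + k) (Ordinal rpos))) in hk.
    by move: hk; rewrite ek eqxx.
  have := leq_card f finj; rewrite card_ord card_ffun card_ord.
  by rewrite leqNgt hqM.
have code : code_exists F b.+1 M D r.
  exists p; split => // i j nij.
  have neq : p i <> p j by move=> e; move: nij; rewrite (pinj _ _ e) eqxx.
  have := Sd_grow hb neq; rewrite -!dcE => h.
  have := pd i j nij => h2; lia.
have [r1 [H1 H2]] := exists_min code.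
by exists r1.
Qed.
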